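(* For every $k\ge1$ for which $\beta_0,\dots,\beta_k$ are defined, the greatest common divisor of $\beta_0,\beta_1,\dots,\beta_k$ is $\frac{1}{Q_k}$.
   Context: Setting: $k$ (the field) is algebraically closed of characteristic $0$; $\nu^*$ is a $k$-valuation of a function field $K^*$ of transcendence degree $2$ whose value group is a subgroup of $\mathbb{Q}$ and whose residue field $V^*/m_{V^*}$ is $k$; $S$ is an algebraic two-dimensional regular local ring with quotient field $K^*$ dominated by $V^*$, with regular parameters $(x,y)$, and $\nu^*$ is normalized so that $\nu^*(x)=1$. Jumping polynomials: $T_0=x$, $T_1=y$, $q_0=\infty$, $p_1,q_1$ coprime positive integers with $\nu^*(y)=p_1/q_1$; for $i\ge1$, $n_{i,j}$ ($0\le j<i$) are nonnegative integers with $n_{i,j}<q_j$ and $q_i\nu^*(T_i)=\sum_{j<i}n_{i,j}\nu^*(T_j)$, $\lambda_i\in k$ is the residue of $T_i^{q_i}/\prod_{j<i}T_j^{n_{i,j}}$, $T_{i+1}=T_i^{q_i}-\lambda_i\prod_{j<i}T_j^{n_{i,j}}$, and $p_{i+1},q_{i+1}$ are coprime positive integers with $\nu^*(T_{i+1})=q_i\nu^*(T_i)+\frac{1}{q_1\cdots q_i}\frac{p_{i+1}}{q_{i+1}}$. Put $\beta_i=\nu^*(T_i)$ and $Q_i=q_1\cdots q_i$. For rationals, $b$ $\mathbb{Z}$-divides $a$ if $a\in b\mathbb{Z}$; the greatest common divisor of finitely many rationals is the greatest rational $g$ that $\mathbb{Z}$-divides all of them. *)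

(* Defs.v *)
From HB Require Import structures.
From mathcomp Require Import all_boot all_order all_algebra.
Set Implicit Arguments. Unset Strict Implicit. Unset Printing Implicit Defensive.
Import Order.TTheory GRing.Theory Num.Theory.
Local Open Scope ring_scope.

Definition Zdvd (b a : rat) : Prop := exists z : int, a = z%:~R * b.

Definition gcdQ (s : seq rat) (g : rat) : Prop :=
  (forall a, a \in s -> Zdvd g a) /\
  (forall g', (forall a, a \in s -> Zdvd g' a) -> g' <= g).

(* nu : K -> Q (values on 0 irrelevant) is a valuation of K, trivial on the
   image of the ground field kF (a kF-valuation), with value group in Q. *)
Definition k_valuation (kF K : fieldType) (emb : {rmorphism kF -> K})
  (nu : K -> rat) : Prop :=
  [/\ forall a b : K, a != 0 -> b != 0 -> nu (a * b) = nu a + nu b,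
      forall a b : K, a != 0 -> b != 0 -> a + b != 0 ->
        Num.min (nu a) (nu b) <= nu (a + b)
    & forall c : kF, c != 0 -> nu (emb c) = 0 ].

Definition residue_of (kF K : fieldType) (emb : {rmorphism kF -> K})
  (nu : K -> rat) (a : K) (c : kF) : Prop :=
  a = emb c \/ (a - emb c != 0 /\ 0 < nu (a - emb c)).

Definition residue_field_is_k (kF K : fieldType) (emb : {rmorphism kF -> K})
  (nu : K -> rat) : Prop :=
  forall a : K, a != 0 -> 0 <= nu a -> exists c : kF, residue_of emb nu a c.

Definition Qprod (q : nat -> nat) (i : nat) : nat := \prod_(1 <= j < i.+1) q j.

Definition jumping_polys_upto (kF K : fieldType) (emb : {rmorphism kF -> K})
  (nu : K -> rat) (x y : K) (T : nat -> K) (p q : nat -> nat)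
  (n : nat -> nat -> nat) (lam : nat -> kF) (m : nat) : Prop :=
  [/\ T 0%N = x, T 1%N = y,
      [/\ (0 < p 1%N)%N, (0 < q 1%N)%N, coprime (p 1%N) (q 1%N)
        & nu y = (p 1%N)%:R / (q 1%N)%:R]
    & forall i, (1 <= i < m)%N ->
      [/\ forall j, (1 <= j < i)%N -> (n i j < q j)%N,
          (q i)%:R * nu (T i) = \sum_(j < i) (n i j)%:R * nu (T j),
          residue_of emb nu (T i ^+ q i / \prod_(j < i) T j ^+ n i j) (lam i),
          T i.+1 = T i ^+ q i - emb (lam i) * \prod_(j < i) T j ^+ n i j /\
          T i.+1 != 0 &
          [/\ (0 < p i.+1)%N, (0 < q i.+1)%N, coprime (p i.+1) (q i.+1)
            & nu (T i.+1) = (q i)%:R * nu (T i)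
                + ((Qprod q i)%:R)^-1 * ((p i.+1)%:R / (q i.+1)%:R)]]].

(* Main.v *)
Require Import Defs.
From HB Require Import structures.
From mathcomp Require Import all_boot all_order all_algebra.
From mathcomp Require Import ring lra zify.
Import Order.TTheory GRing.Theory Num.Theory.
Local Open Scope ring_scope.

Lemma Zdvd_add g a b : Zdvd g a -> Zdvd g b -> Zdvd g (a + b).
Proof. by move=> [u ->] [v ->]; exists (u + v); rewrite intrD mulrDl. Qed.

Lemma Zdvd_mulz g a (c : int) : Zdvd g a -> Zdvd g (c%:~R * a).
Proof. by move=> [u ->]; exists (c * u); rewrite intrM mulrA. Qed.

Lemma bezout_nat (p q : nat) : coprime p q ->
  exists u v : int, u * p%:Z + v * q%:Z = 1.
Proof.
move=> cp; have [u [v e]] := Bezoutz p q.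
exists u, v; rewrite e; rewrite /gcdz /=.
by move/eqP: cp => ->.
Qed.

Theorem proposition5p3
  (kF : closedFieldType) (char0 : [pchar kF] =i pred0)
  (K : fieldType) (emb : {rmorphism kF -> K}) (nu : K -> rat)
  (hval : k_valuation emb nu) (hres : residue_field_is_k emb nu)
  (x y : K) (hx : x != 0) (hy : y != 0)
  (hnux : nu x = 1) (hnuy : 0 < nu y)
  (T : nat -> K) (p q : nat -> nat) (n : nat -> nat -> nat) (lam : nat -> kF)
  (k : nat) (hk : (1 <= k)%N)
  (hT : jumping_polys_upto emb nu x y T p q n lam k) :
  gcdQ [seq nu (T i) | i <- iota 0 k.+1] ((Qprod q k)%:R)^-1.
Proof.
case: hT => T0 T1 [p1 q1 cp1 nuy] hstep.
set b := fun i => nu (T i).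
have Qs : forall i, Qprod q i.+1 = (Qprod q i * q i.+1)%N.
  by move=> i; rewrite /Qprod big_nat_recr.
have Q0 : Qprod q 0 = 1%N by rewrite /Qprod big_geq.
have step : forall i, (i < k)%N ->
  [/\ (0 < q i.+1)%N, coprime (p i.+1) (q i.+1) &
   exists c : int, b i.+1 = c%:~R * b i + (p i.+1)%:R / (Qprod q i.+1)%:R].
  case=> [|i] ik.
    split=> //; exists 0; rewrite mul0r add0r /b T1 nuy Qs Q0 mul1n.
    by [].
  have /hstep [_ _ _ _ [pp qp cp e]] : (1 <= i.+1 < k)%N by apply/andP.
  split=> //; exists (q i.+1)%:Z; rewrite /b e (Qs i.+1) natrM invfM.
  by rewrite pmulrn; ring.
have Qpos : forall i, (i <= k)%N -> (0 < Qprod q i)%N.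
  elim=> [|i IH] ik; first by rewrite Q0.
  have [qp _ _] := step i ik.
  by rewrite Qs muln_gt0 IH ?qp // ltnW.
have main : forall i, (i <= k)%N ->
  (forall j, (j <= i)%N -> Zdvd ((Qprod q i)%:R^-1) (b j)) /\
  (forall g, (forall j, (j <= i)%N -> Zdvd g (b j)) -> Zdvd g ((Qprod q i)%:R^-1)).
  elim=> [|i IH] ik.
    rewrite Q0 invr1; split.
      by move=> j; rewrite leqn0 => /eqP ->; exists 1; rewrite /b T0 hnux mulr1.
    by move=> g /(_ 0%N (leqnn 0)); rewrite /b T0 hnux.
  have [IHa IHb] := IH (ltnW ik).
  have [qp cp [c ec]] := step i ik.
  have Qi0 : (Qprod q i)%:R != 0 :> rat by rewrite pnatr_eq0 -lt0n Qpos // ltnW.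
  have qi0 : (q i.+1)%:R != 0 :> rat by rewrite pnatr_eq0 -lt0n.
  have IHa' := IHa; have IHb' := IHb.
  have eQ : (Qprod q i)%:R^-1 = (q i.+1)%:Z%:~R * (Qprod q i.+1)%:R^-1 :> rat.
    rewrite Qs natrM invfM pmulrn; field; by rewrite qi0 Qi0.
  split.
    move=> j; rewrite leq_eqVlt ltnS => /orP [/eqP ->|ji].
      rewrite ec; apply: Zdvd_add.
        apply: Zdvd_mulz; rewrite -/b; have [z ->] := IHa' i (leqnn i).
        by exists (z * q i.+1); rewrite eQ intrM mulrA.
      by exists (p i.+1)%:Z; rewrite pmulrn.
    have [z ->] := IHa' j ji; exists (z * q i.+1).
    by rewrite eQ intrM mulrA.
  move=> g hg.
  have h1 : Zdvd g ((q i.+1)%:Z%:~R * (Qprod q i.+1)%:R^-1).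
    by rewrite -eQ; apply: IHb' => j ji; apply: hg; apply: leqW.
  have h2 : Zdvd g ((p i.+1)%:Z%:~R * (Qprod q i.+1)%:R^-1).
    have -> : (p i.+1)%:Z%:~R * (Qprod q i.+1)%:R^-1 = b i.+1 + (-c)%:~R * b i :> rat.
      by rewrite ec pmulrn rmorphN /=; ring.
    apply: Zdvd_add; first exact: hg.
    by apply: Zdvd_mulz; apply: hg; apply: leqW.
  have [u [v euv]] := @bezout_nat _ _ cp.
  have -> : (Qprod q i.+1)%:R^-1 =
     u%:~R * ((p i.+1)%:Z%:~R * (Qprod q i.+1)%:R^-1) +
     v%:~R * ((q i.+1)%:Z%:~R * (Qprod q i.+1)%:R^-1) :> rat.
    rewrite !mulrA -mulrDl -!intrM -intrD euv; by rewrite mul1r.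
  by apply: Zdvd_add; apply: Zdvd_mulz.
have [ma mb] := main k (leqnn k).
split.
  move=> a /mapP [j]; rewrite mem_iota add0n => /andP [_ jk] ->.
  exact: ma.
move=> g hg.
have [z ez] : Zdvd g ((Qprod q k)%:R^-1).
  apply: mb => j jk; apply: hg; apply/mapP; exists j => //.
  by rewrite mem_iota add0n ltnS.
have Qp : 0 < (Qprod q k)%:R^-1 :> rat by rewrite invr_gt0 ltr0n Qpos.
case: (lerP g 0) => g0; first by apply: (le_trans g0); apply: ltW.
rewrite ez; have zp : 0 < z.
  by rewrite -(ltr0z rat) -(pmulr_lgt0 _ g0) -ez.
have : (1 <= z%:~R :> rat) by rewrite ler1z.
by move=> h; rewrite -{1}[g]mul1r ler_pM2r.
Qed.
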